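(* Let $\mathrm{IC}(\mathbf{a}_0,\dots,\mathbf{a}_{n-1})$ be an interval circulant matrix. For any nonzero $A\in\mathrm{IC}(\mathbf{a}_0,\dots,\mathbf{a}_{n-1})$ there exists $k\in\{0,\dots,n-1\}$ such that $A^{(k)}\ne0$ and $A^{(k)}/\lambda(A^{(k)})\le A/\lambda(A)$ entrywise.
   Context: $\mathrm{Circ}(a_0,\dots,a_{n-1})$ is the matrix with $A_{i,j}=a_t$, $t\in\{0,\dots,n-1\}$, $t\equiv j-i\pmod n$. $\mathrm{IC}(\mathbf{a}_0,\dots,\mathbf{a}_{n-1})$ is the set of all $\mathrm{Circ}(a_0,\dots,a_{n-1})$ with $a_t\in\mathbf{a}_t$, where each $\mathbf{a}_t\subseteq\mathbb{R}_+$ is a nonempty interval of one of the forms $[\underline{a}_t,\overline{a}_t]$, $(\underline{a}_t,\overline{a}_t)$, $(\underline{a}_t,\overline{a}_t]$, $[\underline{a}_t,\overline{a}_t)$. For $k\in\{0,\dots,n-1\}$, $A^{(k)}=\mathrm{Circ}(\underline{a}_0,\dots,\underline{a}_{k-1},\overline{a}_k,\underline{a}_{k+1},\dots,\underline{a}_{n-1})$. $\lambda(\cdot)$ is the greatest max-algebraic eigenvalue (maximum cycle geometric mean). *)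

(* Defs.v *)
From Stdlib Require Import Reals.
From mathcomp Require Import all_boot.
Set Implicit Arguments. Unset Strict Implicit. Unset Printing Implicit Defensive.

Definition mat (n : nat) := 'I_n -> 'I_n -> R.

(* Circ(a_0,...,a_{n-1}) : A i j = a_t with t = (j - i) mod n, 0 <= t < n. *)
Definition Circ (n : nat) (a : nat -> R) : mat n :=
  fun i j => a ((j + n - i) %% n)%N.

Arguments Circ n a : clear implicits.

(* Interval membership: cl/cr = true means the left/right endpoint is included. *)
Definition in_interval (cl cr : bool) (lo hi x : R) : Prop :=
  (if cl then Rle lo x else Rlt lo x) /\ (if cr then Rle x hi else Rlt x hi).

(* The interval with these data is nonempty and contained in R_+ = [0, +oo). *)
Definition good_interval (cl cr : bool) (lo hi : R) : Prop :=
  Rle 0 lo /\ (if cl && cr then Rle lo hi else Rlt lo hi).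

Definition Rroot (k : nat) (x : R) : R :=
  if Rle_dec x R0 then R0 else Rpower x (Rinv (INR k)).

(* Geometric mean of the cycle (s 0, s 1, ..., s k, s 0) of length k+1. *)
Definition cycle_gmean (n k : nat) (A : mat n) (s : {ffun 'I_k.+1 -> 'I_n}) : R :=
  Rroot k.+1 (\big[Rmult/R1]_(t < k.+1) A (s t) (s (ordS t))).

(* lambda(A): maximum cycle geometric mean over all cycles of length 1..n
   (for nonnegative A; 0 is neutral for Rmax on nonnegative values). *)
Definition lambda (n : nat) (A : mat n) : R :=
  \big[Rmax/R0]_(k < n) \big[Rmax/R0]_(s : {ffun 'I_k.+1 -> 'I_n}) cycle_gmean A s.

(* A^(k) = Circ(lo_0, ..., lo_{k-1}, hi_k, lo_{k+1}, ..., lo_{n-1}). *)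
Definition Ak (n : nat) (lo hi : nat -> R) (k : 'I_n) : mat n :=
  Circ n (fun t => if (t == nat_of_ord k)%N then hi t else lo t).

Definition nonzero_mat (n : nat) (A : mat n) : Prop := exists i j, A i j <> R0.

(* Main.v *)
Require Import Defs.
From Stdlib Require Import Reals.
From mathcomp Require Import all_boot.
From Stdlib Require Import Lra.

Open Scope R_scope.

Lemma sz_enum n : size (index_enum 'I_n) = n.
Proof. by rewrite /index_enum; unlock; rewrite -enumT size_enum_ord. Qed.

Lemma bigmax_ge (I : eqType) (r : seq I) (F : I -> R) x :
  x \in r -> F x <= \big[Rmax/R0]_(i <- r) F i.
Proof.
elim: r => [//|y r IH]; rewrite in_cons big_cons /=.
case/orP => [/eqP -> | H]; first by apply: Rmax_l.
apply: Rle_trans (IH H) _; apply: Rmax_r.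
Qed.

Lemma bigmax_le (I : Type) (r : seq I) (F : I -> R) c :
  0 <= c -> (forall i, F i <= c) -> \big[Rmax/R0]_(i <- r) F i <= c.
Proof.
move=> c0 HF; apply: (big_ind (fun x => x <= c)) => // x y Hx Hy.
by apply: Rmax_lub.
Qed.

Lemma prod_bound (I : Type) (r : seq I) (F : I -> R) c :
  (forall i, 0 <= F i <= c) ->
  0 <= \big[Rmult/R1]_(i <- r) F i <= c ^ (size r).
Proof.
move=> HF; elim: r => [|y r [IH1 IH2]]; first by rewrite big_nil /=; lra.
rewrite big_cons /=; have [h1 h2] := HF y; split.
  by apply: Rmult_le_pos.
by apply: Rmult_le_compat.
Qed.

Lemma prod_const (I : Type) (r : seq I) x :
  \big[Rmult/R1]_(i <- r) x = x ^ (size r).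
Proof. by elim: r => [|y r IH]; rewrite ?big_nil ?big_cons //= IH. Qed.

Lemma Rroot_pow N x : 0 <= x -> Rroot N.+1 (x ^ N.+1) = x.
Proof.
move=> x0; rewrite /Rroot.
case: (Rle_dec (x ^ N.+1) R0) => H; cbv beta iota delta [is_left].
  have : ~ 0 < x by move=> xp; have := pow_lt x N.+1 xp; lra.
  simpl; lra.
have xp : 0 < x.
  case: (Req_dec x 0) => [e|]; last lra.
  by exfalso; apply: H; rewrite e pow_i //; [lra | apply/ltP].
rewrite -(Rpower_pow N.+1 _ xp) Rpower_mult Rinv_r ?Rpower_1 //.
apply: not_0_INR => //.
Qed.

Lemma Rroot_le N p c : 0 <= c -> 0 <= p <= c ^ N.+1 -> Rroot N.+1 p <= c.
Proof.
move=> c0 [p0 pc]; rewrite /Rroot.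
case: (Rle_dec p R0) => H; cbv beta iota delta [is_left]; first by [].
have cp : 0 < c.
  case: (Req_dec c 0) => [e|]; last lra.
  by exfalso; apply: H; rewrite e pow_i in pc; [lra | apply/ltP].
apply: (@Rle_trans _ (Rpower (c ^ N.+1) (/ INR N.+1))).
  apply: Rle_Rpower_l; last lra.
  left; apply: Rinv_0_lt_compat; apply: lt_0_INR; apply/ltP => //.
right; have := @Rroot_pow N c (Rlt_le _ _ cp); rewrite /Rroot.
case: (Rle_dec (c ^ N.+1) R0) => H2; cbv beta iota delta [is_left] => //.
have : 0 < c ^ N.+1 by apply: pow_lt.
lra.
Qed.

Lemma lambda_le n (M : mat n) c :
  0 <= c -> (forall i j, 0 <= M i j <= c) -> lambda M <= c.
Proof.
move=> c0 HM; rewrite /lambda; apply: bigmax_le => // k.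
apply: bigmax_le => // s; rewrite /cycle_gmean.
apply: Rroot_le => //.
have := @prod_bound _ (index_enum (ordinal k.+1)) (fun t => M (s t) (s (ordS t))) c.
by rewrite sz_enum; apply.
Qed.

Lemma key_mod n t m : (0 < n)%N -> (t < n)%N ->
  ((((m.+1 %% n) * t) %% n + n - (m * t %% n)) %% n)%N = t.
Proof.
move=> n0 tn.
have Yn : (m * t %% n < n)%N by apply: ltn_pmod.
set X := ((m.+1 %% n) * t) %% n; set Y := m * t %% n.
suff H : (X + n - Y == t %[mod n]) by rewrite (eqP H) modn_small.
rewrite -(eqn_modDr Y) subnK; last first.
  by apply: leq_trans (ltnW Yn) (leq_addl _ _).
by rewrite /X /Y modnDr modn_mod modnMml modnDmr mulSn.
Qed.

Lemma lambda_ge n (b : nat -> R) t : (0 < n)%N -> (t < n)%N ->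
  (forall u, (u < n)%N -> 0 <= b u) -> b t <= lambda (Circ n b).
Proof.
case: n => [//|n] _ tn Hb.
rewrite /lambda.
apply: (Rle_trans _ _ _ _ (@bigmax_ge _ (index_enum (ordinal n.+1)) (fun k : 'I_n.+1 => \big[Rmax/R0]_(s : {ffun 'I_k.+1 -> 'I_n.+1}) cycle_gmean (Circ n.+1 b) s) ord_max (mem_index_enum _))).
rewrite /=.
set s : {ffun 'I_n.+1 -> 'I_n.+1} := [ffun m : 'I_n.+1 => inord ((m * t) %% n.+1)].
apply: (Rle_trans _ _ _ _ (@bigmax_ge _ (index_enum _) (fun s => cycle_gmean (Circ n.+1 b) s) s (mem_index_enum _))).
rewrite /cycle_gmean.
rewrite (eq_bigr (fun _ => b t)); last first.
  move=> m _; rewrite /Circ /s !ffunE !inordK ?ltn_pmod //.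
  by rewrite key_mod.
rewrite prod_const sz_enum Rroot_pow; [lra | exact: Hb].
Qed.

Lemma exists_max (T : eqType) (r : seq T) (F : T -> R) :
  r <> [::] -> exists k, k \in r /\ forall t, t \in r -> F t <= F k.
Proof.
elim: r => [//|y r IH] _.
case: r IH => [|z r] IH.
  exists y; split; first by rewrite mem_seq1.
  by move=> t; rewrite mem_seq1 => /eqP ->; lra.
have [k [kin Hk]] := IH ltac:(discriminate).
case: (Rle_dec (F y) (F k)) => H.
  exists k; split; first by rewrite in_cons kin orbT.
  move=> t; rewrite in_cons => /orP [/eqP -> //|]; exact: Hk.
exists y; split; first by rewrite in_cons eqxx.
move=> t; rewrite in_cons => /orP [/eqP -> |/Hk]; lra.
Qed.

Lemma div_mono p q d d' : 0 <= p <= q -> 0 < d <= d' -> p / d' <= q / d.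
Proof.
move=> [p0 pq] [d0 dd]; rewrite /Rdiv.
apply: Rmult_le_compat => //.
  by left; apply: Rinv_0_lt_compat; lra.
by apply: Rinv_le_contravar.
Qed.

Theorem lemma4 (n : nat) (lo hi : nat -> R) (cl cr : nat -> bool)
  (Hint : forall t : 'I_n, good_interval (cl t) (cr t) (lo t) (hi t))
  (a : nat -> R)
  (Ha : forall t : 'I_n, in_interval (cl t) (cr t) (lo t) (hi t) (a t))
  (HA : nonzero_mat (Circ n a)) :
  exists k : 'I_n, nonzero_mat (Ak lo hi k) /\
    forall i j : 'I_n,
      Rle (Rdiv (Ak lo hi k i j) (lambda (Ak lo hi k)))
          (Rdiv (Circ n a i j) (lambda (Circ n a))).
Proof.
have n0 : (0 < n)%N by case: HA => i _; exact: (leq_ltn_trans (leq0n i) (ltn_ord i)).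
have Hb : forall u, (u < n)%N -> 0 <= lo u /\ lo u <= a u /\ a u <= hi u.
  move=> u un; have := Hint (Ordinal un); have := Ha (Ordinal un); rewrite /=.
  rewrite /good_interval /in_interval.
  by case: (cl u); case: (cr u) => /= -[h1 h2] -[h3 h4]; lra.
have [k [_ Hk]] := @exists_max _ (index_enum (ordinal n)) (fun t : 'I_n => a t)
   ltac:(by move=> e; have := sz_enum n; rewrite e /= => en; rewrite -en in n0).
have Hk' : forall u, (u < n)%N -> a u <= a k.
  by move=> u un; apply: (Hk (Ordinal un) (mem_index_enum _)).
have akp : 0 < a k.
  case: HA => i [j]; rewrite /Circ => H.
  have un : ((j + n - i) %% n < n)%N by apply: ltn_pmod.
  have := Hb _ un; have := Hk' _ un; lra.
have lamA : lambda (Circ n a) = a k.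
  apply: Rle_antisym.
    apply: lambda_le; first lra.
    move=> i j; rewrite /Circ.
    have un : ((j + n - i) %% n < n)%N by apply: ltn_pmod.
    have := Hb _ un; have := Hk' _ un; lra.
  apply: lambda_ge => // u un; have := Hb _ un; lra.
set b := fun t : nat => if (t == nat_of_ord k)%N then hi t else lo t.
have Hb0 : forall u, (u < n)%N -> 0 <= b u.
  move=> u un; rewrite /b; case: (u == k); have := Hb _ un; lra.
have lamK : hi k <= lambda (Ak lo hi k).
  have := @lambda_ge n b k n0 (ltn_ord k) Hb0.
  by rewrite /b eqxx.
have hkp : a k <= hi k by have := Hb _ (ltn_ord k); lra.
exists k; split.
  exists (Ordinal n0), k; rewrite /Ak /Circ /= subn0 modnDr modn_small //.
  rewrite eqxx; lra.
move=> i j; rewrite lamA.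
move: lamK; set L := lambda (Ak lo hi k) => lamK.
rewrite /Ak /Circ.
have un : ((j + n - i) %% n < n)%N by apply: ltn_pmod.
have := Hb _ un.
case: eqP => [e|ne] H.
  rewrite e.
  have -> : a k / a k = 1 by field; lra.
  have <- : L / L = 1 by field; lra.
  apply: div_mono; lra.
apply: div_mono; lra.
Qed.
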